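(* Let $(\alpha_n)_{n\ge1}$ be a sequence with $0<\alpha_n<1$ for all $n$ and $\sum_n\alpha_n<\infty$, and let $E\sim(\alpha_n)$ be the associated Cantor set. Then $E$ is a nowhere dense closed set which has strong uniform density type (SUDT).
   Context: Construction of $E\sim(\alpha_n)$: start with $\mathcal{I}_0=\{[0,1]\}$. Given the collection $\mathcal{I}_{n-1}$ of $2^{n-1}$ disjoint closed intervals of equal length, obtain $\mathcal{I}_n$ by removing from each $I\in\mathcal{I}_{n-1}$ the open interval centered at the midpoint of $I$ of length $\alpha_n|I|$, leaving $2^n$ closed intervals each of length $d_n$, where $d_0=1$ and $2d_n=(1-\alpha_n)d_{n-1}$. Let $E_n=\bigcup_{I\in\mathcal{I}_n}I$ and $E=\bigcap_{n}E_n$. $|A|$ denotes Lebesgue measure. For measurable $E$ and $\gamma,\delta>0$, $E^{\gamma,\delta}=\{x\in\mathbb{R} : \forall r\in(0,\delta],\ \max\{|(x-r,x)\cap E|/r,\ |(x,x+r)\cap E|/r\}\ge\gamma\}$. $E$ has SUDT if there exist sequences $\gamma_n\nearrow1$ and $\delta_n\searrow0$ such that $E\subseteq\bigcup_{k=1}^\infty\bigcap_{n=k}^\infty E^{\gamma_n,\delta_n}$. *)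

(* Defs.v *)
From HB Require Import structures.
From mathcomp Require Import all_boot all_order all_algebra.
From mathcomp Require Import all_classical all_reals all_analysis.
Set Implicit Arguments. Unset Strict Implicit. Unset Printing Implicit Defensive.
Import Order.TTheory GRing.Theory Num.Theory.
Import numFieldNormedType.Exports.
Local Open Scope classical_set_scope.
Local Open Scope ring_scope.

(* Lengths d_n of the intervals of generation n:  d_0 = 1, 2 d_n = (1 - alpha_n) d_{n-1}.
   The sequence alpha is indexed from 1 (alpha 0 is never used). *)
Fixpoint cantor_len (R : realType) (alpha : nat -> R) (n : nat) : R :=
  match n with
  | 0 => 1
  | m.+1 => (1 - alpha m.+1) * cantor_len alpha m / 2
  end.

(* Left endpoint of the k-th interval (k < 2^n, numbered left to right) of generation n.
   The interval k of generation n+1 is the left (k even) or right (k odd) piece left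
   when the open middle part of length alpha_{n+1} d_n is removed from interval k/2
   of generation n. *)
Fixpoint cantor_left (R : realType) (alpha : nat -> R) (n : nat) (k : nat) : R :=
  match n with
  | 0 => 0
  | m.+1 => cantor_left alpha m k./2 +
            (if odd k then cantor_len alpha m - cantor_len alpha m.+1 else 0)
  end.

Definition cantor_level (R : realType) (alpha : nat -> R) (n : nat) : set R :=
  \bigcup_(k in [set k : nat | (k < 2 ^ n)%N])
    `[cantor_left alpha n k, cantor_left alpha n k + cantor_len alpha n]%classic.

Definition cantor_set (R : realType) (alpha : nat -> R) : set R :=
  \bigcap_(n in [set: nat]) cantor_level alpha n.

Definition nowhere_dense (R : realType) (A : set R) : Prop :=
  interior (closure A) = set0.

Definition density_set (R : realType) (E : set R) (gamma delta : R) : set R :=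
  [set x : R | forall r : R, 0 < r -> r <= delta ->
     let left_int : set R := `]x - r, x[%classic in
     let right_int : set R := `]x, x + r[%classic in
     (gamma%:E <=
      Order.max
        (lebesgue_measure (left_int `&` E) * (r^-1)%:E)
        (lebesgue_measure (right_int `&` E) * (r^-1)%:E))%E].

Definition SUDT (R : realType) (E : set R) : Prop :=
  measurable E /\
  exists (gamma delta : nat -> R),
    [/\ (forall n, 0 < gamma n), {homo gamma : n m / (n <= m)%N >-> n <= m}
        & gamma @ \oo --> (1 : R)] /\
    [/\ (forall n, 0 < delta n), {homo delta : n m / (n <= m)%N >-> m <= n}
        & delta @ \oo --> (0 : R)] /\
    E `<=` \bigcup_(k in [set: nat])
             \bigcap_(n in [set n : nat | (k <= n)%N]) density_set E (gamma n) (delta n).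

(* Main.v *)
Require Import Defs.
From HB Require Import structures.
From mathcomp Require Import all_boot all_order all_algebra.
From mathcomp Require Import all_classical all_reals all_analysis.
From mathcomp Require Import ring lra zify.
Import Order.TTheory GRing.Theory Num.Theory.
Import numFieldNormedType.Exports.
Local Open Scope classical_set_scope.
Local Open Scope ring_scope.
Set Implicit Arguments. Unset Strict Implicit. Unset Printing Implicit Defensive.
Lemma len_pos (R : realType) (alpha : nat -> R) :
  (forall n, (0 < n)%N -> 0 < alpha n < 1) -> forall n, 0 < cantor_len alpha n.
Proof.
move=> Ha; elim=> [|n IH] /=; first exact: ltr01.
have /andP[_ h1] := Ha n.+1 isT.
by apply: divr_gt0 => //; apply: mulr_gt0 => //; rewrite subr_gt0.
Qed.

Lemma len_S2 (R : realType) (alpha : nat -> R) n :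
  2 * cantor_len alpha n.+1 = (1 - alpha n.+1) * cantor_len alpha n.
Proof. by rewrite /=; field. Qed.

Lemma len_lt (R : realType) (alpha : nat -> R) :
  (forall n, (0 < n)%N -> 0 < alpha n < 1) -> forall n,
  2 * cantor_len alpha n.+1 < cantor_len alpha n.
Proof.
move=> Ha n; rewrite len_S2 mulrBl mul1r ltrBlDr ltrDl.
have /andP[h0 _] := Ha n.+1 isT.
by apply: mulr_gt0 => //; apply: len_pos.
Qed.

Lemma len_le (R : realType) (alpha : nat -> R) :
  (forall n, (0 < n)%N -> 0 < alpha n < 1) -> forall n,
  cantor_len alpha n.+1 <= cantor_len alpha n.
Proof.
move=> Ha n; have := len_lt Ha n; have := len_pos Ha n.+1; lra.
Qed.

Lemma len_homo (R : realType) (alpha : nat -> R) :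
  (forall n, (0 < n)%N -> 0 < alpha n < 1) ->
  {homo cantor_len alpha : n m / (n <= m)%N >-> m <= n}.
Proof.
move=> Ha; apply: (homo_leq (r := fun x y => y <= x)) => //.
  by move=> y x z h1 h2; apply: le_trans h2 h1.
by move=> i; apply: len_le.
Qed.

Lemma len_geo (R : realType) (alpha : nat -> R) :
  (forall n, (0 < n)%N -> 0 < alpha n < 1) -> forall n,
  cantor_len alpha n <= (2^-1) ^+ n.
Proof.
move=> Ha; elim=> [|n IH]; first by rewrite expr0.
have := len_lt Ha n; rewrite exprS; lra.
Qed.

Lemma len_small (R : realType) (alpha : nat -> R) :
  (forall n, (0 < n)%N -> 0 < alpha n < 1) -> forall e : R, 0 < e ->
  exists m, cantor_len alpha m < e.
Proof.
move=> Ha e e0.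
have h : (2^-1 : R) ^+ n @[n --> \oo] --> 0.
  by apply: cvg_expr; rewrite ger0_norm // invf_lt1 // ltr1n.
have := cvgr_dist_lt _ _ h _ e0.
case=> m _ Hm; exists m.
have := Hm m (leqnn m); rewrite sub0r normrN ger0_norm; last first.
  by apply: exprn_ge0.
by apply: le_lt_trans; apply: len_geo.
Qed.
Lemma left_S (R : realType) (alpha : nat -> R) n k :
  cantor_left alpha n.+1 k = cantor_left alpha n k./2 +
    (if odd k then cantor_len alpha n - cantor_len alpha n.+1 else 0).
Proof. by []. Qed.

Lemma in_cc (R : realType) (a b x : R) : `[a, b]%classic x <-> a <= x <= b.
Proof. by rewrite /= in_itv. Qed.

Lemma in_oo (R : realType) (a b x : R) : `]a, b[%classic x <-> a < x < b.
Proof. by rewrite /= in_itv. Qed.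

Lemma child_bounds (R : realType) (alpha : nat -> R) :
  (forall n, (0 < n)%N -> 0 < alpha n < 1) -> forall n k,
  cantor_left alpha n k./2 <= cantor_left alpha n.+1 k /\
  cantor_left alpha n.+1 k + cantor_len alpha n.+1 <=
    cantor_left alpha n k./2 + cantor_len alpha n.
Proof.
move=> Ha n k; have h1 := len_lt Ha n; have h2 := len_pos Ha n.+1.
rewrite left_S; case: (odd k); split; lra.
Qed.

Lemma level_S (R : realType) (alpha : nat -> R) :
  (forall n, (0 < n)%N -> 0 < alpha n < 1) -> forall n,
  cantor_level alpha n.+1 `<=` cantor_level alpha n.
Proof.
move=> Ha n x [k hk] /in_cc/andP[hx1 hx2]; exists k./2.
  by move: hk; rewrite /= expnS; lia.
apply/in_cc; have [h1 h2] := child_bounds Ha n k.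
by apply/andP; split; lra.
Qed.

Lemma level_homo (R : realType) (alpha : nat -> R) :
  (forall n, (0 < n)%N -> 0 < alpha n < 1) ->
  {homo cantor_level alpha : n m / (n <= m)%N >-> (m `<=` n)}.
Proof.
move=> Ha; apply: (homo_leq (r := fun x y => y `<=` x)).
- by move=> A.
- by move=> y x z h1 h2; apply: subset_trans h2 h1.
by move=> i; apply: level_S.
Qed.

Lemma level_meas (R : realType) (alpha : nat -> R) n :
  measurable (cantor_level alpha n).
Proof. by apply: bigcup_measurable => k _; apply: measurable_itv. Qed.

Lemma set_meas (R : realType) (alpha : nat -> R) :
  measurable (cantor_set alpha).
Proof.
apply: bigcap_measurable; first by exists 0%N.
by move=> k _; apply: level_meas.
Qed.

Lemma mu_mono (R : realType) (A B : set R) : measurable A -> measurable B ->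
  A `<=` B -> (lebesgue_measure A <= lebesgue_measure B)%E.
Proof. by move=> mA mB AB; apply: le_measure => //; rewrite inE. Qed.

Lemma mu_oo_ge (R : realType) (u v : R) :
  ((v - u)%:E <= lebesgue_measure `]u, v[%classic)%E.
Proof.
rewrite lebesgue_measure_itv /=; case: ifP; rewrite lte_fin => h.
  by rewrite -EFinD.
by rewrite lee_fin; move/negbT: h; rewrite -leNgt; lra.
Qed.
Lemma G_level (R : realType) (alpha : nat -> R) (T : nat -> R) :
  (forall n, (0 < n)%N -> 0 < alpha n < 1) ->
  (forall n, 0 <= T n) -> (forall n, alpha n.+1 + T n.+1 <= T n) ->
  forall p n k, (k < 2 ^ n)%N -> forall u v,
  cantor_left alpha n k <= u -> v <= cantor_left alpha n k + cantor_len alpha n ->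
  ((v - u - T n * cantor_len alpha n)%:E <=
     lebesgue_measure (`]u, v[ `&` cantor_level alpha (n + p)))%E.
Proof.
move=> Ha T0 Trec; elim=> [|p IH] n k hk u v hu hv.
- rewrite addn0.
  have -> : `]u, v[ `&` cantor_level alpha n = `]u, v[%classic.
    apply/setIidPl => x /in_oo/andP[h1 h2]; exists k => //.
    by apply/in_cc; apply/andP; split; lra.
  apply: le_trans (mu_oo_ge u v); rewrite lee_fin.
  have := T0 n; have := len_pos Ha n => h1 h2.
  have : 0 <= T n * cantor_len alpha n by apply: mulr_ge0 => //; lra.
  lra.
- rewrite -addSnnS.
  have hlt := len_lt Ha n.
  have hD2 := len_S2 alpha n.
  have Dp := len_pos Ha n; have D'p := len_pos Ha n.+1.
  move: hu hv hlt hD2 Dp D'p.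
  set a := cantor_left alpha n k.
  set D := cantor_len alpha n.
  set D' := cantor_len alpha n.+1.
  move=> hu hv hlt hD2 Dp D'p.
  have /andP[al0 al1] := Ha n.+1 isT.
  have TT := Trec n; have T'0 := T0 n.+1.
  have hk0 : (k.*2 < 2 ^ n.+1)%N by rewrite expnS; lia.
  have hk1 : (k.*2.+1 < 2 ^ n.+1)%N by rewrite expnS; lia.
  have L0 : cantor_left alpha n.+1 k.*2 = a.
    by rewrite left_S odd_double doubleK addr0.
  have L1 : cantor_left alpha n.+1 k.*2.+1 = a + (D - D').
    by rewrite left_S /= odd_double uphalf_double.
  have key : T n.+1 * D' <= T n * D.
    by apply: ler_pM => //; lra.
  case: (leP v (a + D')) => hva.
    have := IH n.+1 k.*2 hk0 u v; rewrite L0 -/D' => /(_ hu hva) h.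
    by apply: le_trans h; rewrite lee_fin; lra.
  case: (leP (a + (D - D')) u) => huc.
    have := IH n.+1 k.*2.+1 hk1 u v; rewrite L1 -/D' => /(_ huc ltac:(lra)) h.
    by apply: le_trans h; rewrite lee_fin; lra.
  have := IH n.+1 k.*2 hk0 u (a + D'); rewrite L0 -/D' => /(_ hu (lexx _)) m1.
  have := IH n.+1 k.*2.+1 hk1 (a + (D - D')) v; rewrite L1 -/D' => /(_ (lexx _) ltac:(lra)) m2.
  set E := cantor_level alpha (n.+1 + p) in m1 m2 *.
  have mE : measurable E by apply: level_meas.
  apply: (@le_trans _ _ (lebesgue_measure ((`]u, a + D'[ `&` E) `|` (`]a + (D - D'), v[ `&` E)))).
    rewrite measureU; first last.
    - rewrite -subset0 => x [[/in_oo/andP[h1 h2] _] [/in_oo/andP[h3 h4] _]]; lra.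
    - by apply: measurableI => //; apply: measurable_itv.
    - by apply: measurableI => //; apply: measurable_itv.
    apply: le_trans (leeD m1 m2); rewrite -EFinD lee_fin.
    have h3 : 0 <= T n.+1 * (alpha n.+1 * D) by apply: mulr_ge0 => //; apply: mulr_ge0; lra.
    have h4 : (alpha n.+1 + T n.+1) * D <= T n * D by apply: ler_pM => //; lra.
    have h5 : T n.+1 * (2 * D') = T n.+1 * ((1 - alpha n.+1) * D) by rewrite hD2.
    lra.
  apply: mu_mono.
  - by apply: measurableU; apply: measurableI => //; apply: measurable_itv.
  - by apply: measurableI => //; apply: measurable_itv.
  - move=> x [[/in_oo/andP[h1 h2] hx] | [/in_oo/andP[h1 h2] hx]]; split => //;
      apply/in_oo; apply/andP; split; lra.
Qed.
Lemma G_set (R : realType) (alpha : nat -> R) (T : nat -> R) :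
  (forall n, (0 < n)%N -> 0 < alpha n < 1) ->
  (forall n, 0 <= T n) -> (forall n, alpha n.+1 + T n.+1 <= T n) ->
  forall n k, (k < 2 ^ n)%N -> forall u v,
  cantor_left alpha n k <= u -> v <= cantor_left alpha n k + cantor_len alpha n ->
  ((v - u - T n * cantor_len alpha n)%:E <=
     lebesgue_measure (`]u, v[ `&` cantor_set alpha))%E.
Proof.
move=> Ha T0 Trec n k hk u v hu hv.
pose F p := `]u, v[ `&` cantor_level alpha (n + p).
have FE : \bigcap_p F p = `]u, v[ `&` cantor_set alpha.
  apply/seteqP; split => x.
    move=> hx; split; first by case: (hx 0%N I).
    move=> j _; case: (hx j I) => _ h.
    by apply: (level_homo Ha (leq_addl n j)).
  by move=> [h1 h2] p _; rewrite /F; split => //; apply: h2.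
have mF : forall p, measurable (F p).
  by move=> p; apply: measurableI; [apply: measurable_itv | apply: level_meas].
have mu0 : (lebesgue_measure (F 0%N) < +oo)%E.
  apply: le_lt_trans (mu_mono (mF 0%N) (measurable_itv `]u, v[) (@subIsetl _ _ _)) _.
  by rewrite lebesgue_measure_itv; case: ifP => _; rewrite ?ltry // -EFinB ltry.
have mI : measurable (\bigcap_p F p) by rewrite FE; apply: measurableI;
  [apply: measurable_itv | apply: set_meas].
have hom : {homo F : p q / (p <= q)%N >-> (q <= p)%O}.
  move=> p q pq; rewrite subsetEset /F; apply: setIS.
  by apply: level_homo => //; rewrite leq_add2l.
have h := nonincreasing_cvg_mu mu0 mF mI hom.
rewrite FE in h; rewrite -(cvg_lim _ h) //.
apply: lime_ge; first by apply/cvg_ex; eexists; exact: h.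
exists 0%N => // p _; rewrite /comp /F; exact: (G_level Ha T0 Trec p hk hu hv).
Qed.
Lemma sep (R : realType) (alpha : nat -> R) :
  (forall n, (0 < n)%N -> 0 < alpha n < 1) -> forall n k k',
  (k < k')%N -> (k' < 2 ^ n)%N ->
  cantor_left alpha n k + cantor_len alpha n < cantor_left alpha n k'.
Proof.
move=> Ha; elim=> [|n IH] k k' kk' hk'; first by move: hk'; rewrite expn0; lia.
have e1 := odd_double_half k; have e2 := odd_double_half k'.
have [c1 c2] := child_bounds Ha n k; have [c3 c4] := child_bounds Ha n k'.
have hlt := len_lt Ha n; have hp := len_pos Ha n.+1.
have : (k./2 <= k'./2)%N by lia.
rewrite leq_eqVlt => /orP[/eqP hh | hh].
  rewrite !left_S hh.
  case ok: (odd k) e1; case ok': (odd k') e2 => /= e2 e1; try lia.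
  by move: hlt hp; rewrite /= => hlt hp; lra.
have := IH _ _ hh ltac:(move: hk'; rewrite expnS; lia).
lra.
Qed.

Lemma gap_out (R : realType) (alpha : nat -> R) :
  (forall n, (0 < n)%N -> 0 < alpha n < 1) -> forall m k, (k < 2 ^ m)%N ->
  ~ cantor_level alpha m.+1 (cantor_left alpha m k + cantor_len alpha m / 2).
Proof.
move=> Ha m k hk [k'' hk''] /in_cc/andP[z1 z2].
have hlt := len_lt Ha m; have hp := len_pos Ha m.+1.
have [c1 c2] := child_bounds Ha m k''.
have hh : (k''./2 < 2 ^ m)%N by move: hk''; rewrite /= expnS; lia.
case: (ltngtP k''./2 k) => hc.
- have := sep Ha hc hk; lra.
- have := sep Ha hc hh; lra.
- move: z1 z2; rewrite left_S hc; case: (odd k'') => z1 z2; lra.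
Qed.
Lemma tail_props (R : realType) (alpha : nat -> R) :
  (forall n, (0 < n)%N -> 0 < alpha n < 1) -> cvgn (series alpha) ->
  exists T : nat -> R, [/\ (forall n, 0 <= T n),
    (forall n, alpha n.+1 + T n.+1 = T n) & T @ \oo --> 0].
Proof.
move=> Ha Hc.
pose S := limn (series alpha).
pose u n := series alpha n.+1.
have h0 : series alpha @ \oo --> S := Hc.
have hu : u @ \oo --> S by move: h0; rewrite -(@cvg_shiftS _ (series alpha) (nbhs S)).
exists (fun n => S - u n); split.
- move=> n; rewrite subr_ge0.
  have -> : S = limn u by rewrite (cvg_lim _ hu).
  apply: nondecreasing_cvgn_le; last by apply/cvg_ex; eexists; exact: hu.
  apply: homo_leq => //; first by move=> y x z; apply: le_trans.
  move=> i; rewrite /u [series alpha i.+2]seriesSr lerDl.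
  by have /andP[] := Ha i.+1 isT => /ltW.
- by move=> n; rewrite /u [series alpha n.+2]seriesSr; lra.
- by have := cvgB (cvg_cst S) hu; rewrite subrr; apply.
Qed.
Lemma dens (R : realType) (alpha : nat -> R) (T : nat -> R) :
  (forall n, (0 < n)%N -> 0 < alpha n < 1) ->
  (forall n, 0 <= T n) -> (forall n, alpha n.+1 + T n.+1 = T n) ->
  forall x, cantor_set alpha x -> forall m r,
  T m <= 1/32 -> cantor_len alpha m.+2 < r -> r <= cantor_len alpha m.+1 ->
  ((1 - 16 * T m)%:E <=
    Order.max (lebesgue_measure (`]((x - r)%R), x[ `&` cantor_set alpha) * (r^-1)%:E)
              (lebesgue_measure (`]x, ((x + r)%R)[ `&` cantor_set alpha) * (r^-1)%:E))%E.
Proof.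
move=> Ha T0 Trec x hx m r Tm h1 h2.
have Trec' : forall n, alpha n.+1 + T n.+1 <= T n by move=> n; rewrite Trec.
have [k' hk' /in_cc/andP[x1 x2]] := hx m.+1 I.
have hk : (k'./2 < 2 ^ m)%N by move: hk'; rewrite /= expnS; lia.
have G := G_set Ha T0 Trec' hk.
have e1 := Trec m; have e2 := Trec m.+1; have t1 := T0 m.+1; have t2 := T0 m.+2.
have /andP[a10 a11] := Ha m.+1 isT; have /andP[a20 a21] := Ha m.+2 isT.
have hD1 := len_S2 alpha m; have hD2 := len_S2 alpha m.+1.
have p0 := len_pos Ha m; have p1 := len_pos Ha m.+1; have p2 := len_pos Ha m.+2.
have q1 : 0 <= (1/2 - alpha m.+2) * cantor_len alpha m.+1 by apply: mulr_ge0; lra.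
have q2 : 0 <= (1/2 - alpha m.+1) * cantor_len alpha m by apply: mulr_ge0; lra.
have hDr : cantor_len alpha m <= 16 * r by lra.
have r0 : 0 < r by lra.
have fin : forall t, ((r - T m * cantor_len alpha m)%:E <= t)%E ->
    ((1 - 16 * T m)%:E <= t * (r^-1)%:E)%E.
  move=> t ht.
  have hr : (0 <= (r^-1)%:E)%E by rewrite lee_fin invr_ge0 ltW.
  apply: le_trans (lee_wpmul2r hr ht).
  rewrite -EFinM lee_fin ler_pdivlMr //.
  have : T m * cantor_len alpha m <= T m * (16 * r) by apply: ler_wpM2l.
  lra.
rewrite left_S in x1 x2.
have hlt := len_lt Ha m.
rewrite le_max; apply/orP.
case ok: (odd k') in x1 x2.
- left; apply: fin; apply: le_trans (G (x - r) x _ _); rewrite ?lee_fin; lra.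
- right; apply: fin; apply: le_trans (G x (x + r) _ _); rewrite ?lee_fin; lra.
Qed.
Theorem theorem3p2 (R : realType) (alpha : nat -> R) :
  (forall n : nat, (0 < n)%N -> 0 < alpha n < 1) ->
  cvgn (series alpha) ->
  [/\ nowhere_dense (cantor_set alpha), closed (cantor_set alpha)
    & SUDT (cantor_set alpha)].
Proof.
move=> Ha Hc.
have cl : closed (cantor_set alpha).
  apply: closed_bigI => n _; apply: closed_bigcup; first exact: (finite_II (2 ^ n)).
  by move=> k _; apply: interval_closed.
have [T [T0 Trec Tc]] := tail_props Ha Hc.
split => //.
- rewrite /nowhere_dense -(proj1 (closure_id _) cl).
  rewrite -subset0 => x /nbhs_ballP [e e0 he].
  have [m hm] := len_small Ha e0.
  have hxE : cantor_set alpha x by apply: he; apply: ballxx.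
  have [k hk /in_cc/andP[x1 x2]] := hxE m I.
  apply: (gap_out Ha hk); apply: (he _ _ m.+1 I).
  have p0 := len_pos Ha m.
  by rewrite ball_itv; apply/in_oo; apply/andP; split; lra.
split; first exact: set_meas.
have [n0 hn0] : exists n0, forall n, (n0 <= n)%N -> T n <= 1/32.
  have h32 : (0 : R) < 1/32 by lra.
  have := cvgr_dist_lt _ _ Tc _ h32.
  case=> n0 _ h; exists n0 => n hn; have := h n hn.
  by rewrite sub0r normrN => /ltW; apply: le_trans; apply: ler_norm.
have Thomo : {homo T : a b / (a <= b)%N >-> b <= a}.
  apply: (homo_leq (r := fun x y => y <= x)) => //.
    by move=> y x z h1 h2; apply: le_trans h2 h1.
  move=> i; rewrite -(Trec i) lerDr.
  by have /andP[] := Ha i.+1 isT => /ltW.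
exists (fun N => 1 - 16 * T (N + n0)), (fun N => cantor_len alpha (N + n0).+1).
split; [split|split; [split|]].
- by move=> N; have := hn0 (N + n0) (leq_addl _ _); lra.
- move=> a b ab; have := Thomo (a + n0)%N (b + n0)%N; rewrite leq_add2r => /(_ ab).
  lra.
- apply/cvgrPdist_lt => e e0.
  have e16 : 0 < e / 16 by apply: divr_gt0.
  have [n1 _ h] := cvgr_dist_lt _ _ Tc _ e16.
  exists n1 => // n /= hn.
  have := h (n + n0)%N ltac:(rewrite /=; lia); have := T0 (n + n0)%N.
  rewrite sub0r normrN => t0; rewrite ger0_norm // => t1.
  have -> : 1 - (1 - 16 * T (n + n0)%N) = 16 * T (n + n0)%N by ring.
  rewrite ger0_norm; [lra | apply: mulr_ge0 => //].
- by move=> N; apply: len_pos.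
- by move=> a b ab; apply: len_homo => //; rewrite ltnS leq_add2r.
- apply/cvgrPdist_lt => e e0; have [m hm] := len_small Ha e0.
  exists m => // n hn; rewrite sub0r normrN ger0_norm; last exact: ltW (len_pos Ha _).
  by apply: le_lt_trans hm; apply: len_homo => //; move: hn; rewrite /=; lia.
move=> x hx; exists 0%N => // N _ r r0 rd /=.
have ex : exists j, cantor_len alpha j < r by apply: len_small.
case: (@ex_minnP (fun j => cantor_len alpha j < r) ex) => j hj jmin.
have hj2 : ((N + n0).+2 <= j)%N.
  rewrite ltnNge; apply/negP => hjle.
  have := len_homo Ha hjle; lra.
have hm := hn0 (j.-2) ltac:(lia).
have e2 : j = (j.-2).+2 by lia.
have h1 : cantor_len alpha (j.-2).+2 < r by rewrite -e2.
have h2 : r <= cantor_len alpha (j.-2).+1.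
  rewrite leNgt; apply/negP => /jmin; lia.
apply: le_trans (dens Ha T0 Trec hx hm h1 h2).
rewrite lee_fin; have := Thomo (N + n0)%N (j.-2) ltac:(lia); lra.
Qed.
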